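(* Along every trajectory of the Physarum dynamics, for every edge $e$ that does not lie on any shortest $s_0$-$s_1$ path, $D_e(t)\to0$ and $Q_e(t)\to 0$ as $t\to\infty$.
   Context: Let $G=(N,E)$ be a finite connected undirected graph with two distinct vertices $s_0$ (source) and $s_1$ (sink). Each edge $e$ has a fixed length $L_e>0$. Each edge has a time-dependent diameter $D_e(t)$ with $D_e(0)>0$, and resistance $R_e=L_e/D_e$. At each time $t$, the vertex potentials $p_v$ (normalized by $p_{s_1}=0$) are the solution of $\sum_{u\in\delta(v)}(p_v-p_u)/R_{uv}=b_v$ for all $v$, where $\delta(v)$ is the set of neighbours of $v$, $b_{s_0}=1$, $b_{s_1}=-1$, $b_v=0$ otherwise; for an edge $e=\{u,v\}$ with an arbitrarily fixed orientation $(u,v)$ the current is $Q_e=(p_u-p_v)/R_e=D_e(p_u-p_v)/L_e$. The diameters evolve by $\dot D_e(t)=|Q_e(t)|-D_e(t)$ for all $e\in E$ (the ''Physarum dynamics''). The length of a path is the sum of $L_e$ over its edges. *)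

(* Defs.v *)
From Stdlib Require Import Reals Lra List.
Import ListNotations.
Open Scope R_scope.

(* A finite undirected graph: vertices 0..n-1, edges 0..m-1; edge e has
   endpoints [ends e] = (u,v), which also fixes the orientation (u,v). *)

Fixpoint sumR (m : nat) (f : nat -> R) : R :=
  match m with
  | O => 0
  | S k => sumR k f + f k
  end.

Definition simple_graph (n m : nat) (ends : nat -> nat * nat) : Prop :=
  (forall e, (e < m)%nat ->
     (fst (ends e) < n)%nat /\ (snd (ends e) < n)%nat /\ fst (ends e) <> snd (ends e))
  /\ (forall e e', (e < m)%nat -> (e' < m)%nat -> e <> e' ->
       ~ (ends e = ends e' \/ ends e = (snd (ends e'), fst (ends e')))).

Definition joins (ends : nat -> nat * nat) (e a b : nat) : Prop :=
  ends e = (a, b) \/ ends e = (b, a).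

Inductive walk (m : nat) (ends : nat -> nat * nat) :
    nat -> nat -> list nat -> list nat -> Prop :=
  | walk_nil : forall a, walk m ends a a [a] []
  | walk_cons : forall a b c e vs es,
      (e < m)%nat -> joins ends e a b -> walk m ends b c vs es ->
      walk m ends a c (a :: vs) (e :: es).

Definition path (m : nat) (ends : nat -> nat * nat) (a c : nat) (es : list nat) : Prop :=
  exists vs, walk m ends a c vs es /\ NoDup vs.

Definition connected (n m : nat) (ends : nat -> nat * nat) : Prop :=
  forall a c, (a < n)%nat -> (c < n)%nat -> exists vs es, walk m ends a c vs es.

Definition path_length (L : nat -> R) (es : list nat) : R :=
  fold_right (fun e acc => L e + acc) 0 es.

Definition shortest_path (m : nat) (ends : nat -> nat * nat) (L : nat -> R)
    (a c : nat) (es : list nat) : Prop :=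
  path m ends a c es /\
  forall es', path m ends a c es' -> path_length L es <= path_length L es'.

Definition on_shortest_path (m : nat) (ends : nat -> nat * nat) (L : nat -> R)
    (s0 s1 e : nat) : Prop :=
  exists es, shortest_path m ends L s0 s1 es /\ In e es.

Definition supply (s0 s1 v : nat) : R :=
  if Nat.eqb v s0 then 1 else if Nat.eqb v s1 then -1 else 0.

(* current on edge e, with the orientation (fst (ends e), snd (ends e)):
   Q_e = D_e (p_u - p_v) / L_e  ( = (p_u - p_v)/R_e with R_e = L_e/D_e ) *)
Definition current (ends : nat -> nat * nat) (L : nat -> R) (De : R)
    (p : nat -> R) (e : nat) : R :=
  De * (p (fst (ends e)) - p (snd (ends e))) / L e.

Definition kirchhoff_term (ends : nat -> nat * nat) (L : nat -> R) (De : R)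
    (p : nat -> R) (v e : nat) : R :=
  if Nat.eqb (fst (ends e)) v then (p v - p (snd (ends e))) * De / L e
  else if Nat.eqb (snd (ends e)) v then (p v - p (fst (ends e))) * De / L e
  else 0.

Definition potentials (n m : nat) (ends : nat -> nat * nat) (L : nat -> R)
    (s0 s1 : nat) (D : nat -> R) (p : nat -> R) : Prop :=
  p s1 = 0 /\
  forall v, (v < n)%nat ->
    sumR m (fun e => kirchhoff_term ends L (D e) p v e) = supply s0 s1 v.

Definition tends_to_0_at_infty (f : R -> R) : Prop :=
  forall eps, eps > 0 -> exists T, forall t, t >= T -> Rabs (f t) < eps.

(* Main.v *)
Require Import Defs.
From Stdlib Require Import Reals Lra Lia List Arith Classical IndefiniteDescription.
Import ListNotations.
Open Scope R_scope.

Lemma sumR_ext : forall m f g, (forall i, (i < m)%nat -> f i = g i) -> sumR m f = sumR m g.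
Proof. induction m; intros f g H; simpl; auto. rewrite (IHm f g) by (intros; apply H; lia).
  rewrite H by lia. reflexivity. Qed.

Lemma sumR_plus : forall m f g, sumR m (fun i => f i + g i) = sumR m f + sumR m g.
Proof. induction m; intros; simpl; [lra|]. rewrite IHm. lra. Qed.

Lemma sumR_scal : forall m c f, sumR m (fun i => c * f i) = c * sumR m f.
Proof. induction m; intros; simpl; [lra|]. rewrite IHm. lra. Qed.

Lemma sumR_minus : forall m f g, sumR m (fun i => f i - g i) = sumR m f - sumR m g.
Proof. induction m; intros; simpl; [lra|]. rewrite IHm. lra. Qed.

Lemma sumR_swap : forall n m (f : nat -> nat -> R),
  sumR n (fun i => sumR m (fun j => f i j)) = sumR m (fun j => sumR n (fun i => f i j)).
Proof. induction n; intros; simpl.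
  - induction m; simpl; [lra|]. rewrite <- IHm. lra.
  - rewrite IHn. rewrite <- sumR_plus. reflexivity. Qed.

Lemma sumR_single : forall n a x, (a < n)%nat ->
  sumR n (fun i => if Nat.eqb a i then x else 0) = x.
Proof. induction n; intros a x Ha; [lia|]. simpl.
  destruct (Nat.eqb_spec a n).
  - subst. assert (sumR n (fun i => if Nat.eqb n i then x else 0) = 0).
    { clear IHn Ha. assert (forall k, (k <= n)%nat -> sumR k (fun i => if Nat.eqb n i then x else 0) = 0).
      { induction k; intros; simpl; [lra|]. destruct (Nat.eqb_spec n k); [lia|]. rewrite IHk by lia. lra. }
      apply H; lia. }
    rewrite H; lra.
  - rewrite IHn by lia. lra. Qed.

Lemma sumR_le : forall m f g, (forall i, (i < m)%nat -> f i <= g i) -> sumR m f <= sumR m g.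
Proof. induction m; intros f g H; simpl; [lra|]. 
  assert (sumR m f <= sumR m g) by (apply IHm; intros; apply H; lia).
  assert (f m <= g m) by (apply H; lia). lra. Qed.

Lemma sumR_nonneg : forall m f, (forall i, (i < m)%nat -> 0 <= f i) -> 0 <= sumR m f.
Proof. induction m; intros f H; simpl; [lra|].
  assert (0 <= sumR m f) by (apply IHm; intros; apply H; lia).
  assert (0 <= f m) by (apply H; lia). lra. Qed.

Lemma sumR_ge_term : forall m f k, (forall i, (i < m)%nat -> 0 <= f i) -> (k < m)%nat ->
  f k <= sumR m f.
Proof. induction m; intros f k H Hk; [lia|]. simpl.
  destruct (Nat.eq_dec k m).
  - subst. assert (0 <= sumR m f) by (apply sumR_nonneg; intros; apply H; lia). lra.
  - assert (f k <= sumR m f) by (apply IHm; [intros; apply H; lia| lia]).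
    assert (0 <= f m) by (apply H; lia). lra. Qed.

Lemma flow_identity : forall n m ends L s0 s1 (Dt : nat -> R) pt (phi : nat -> R),
  simple_graph n m ends -> (s0 < n)%nat -> (s1 < n)%nat -> s0 <> s1 ->
  potentials n m ends L s0 s1 Dt pt ->
  sumR m (fun e => current ends L (Dt e) pt e * (phi (fst (ends e)) - phi (snd (ends e))))
  = phi s0 - phi s1.
Proof.
  intros n m ends L s0 s1 Dt pt phi [Hs _] Hs0 Hs1 Hs01 [_ Hk].
  transitivity (sumR n (fun w => phi w * supply s0 s1 w)).
  2: { rewrite (sumR_ext n _ (fun w => (if Nat.eqb s0 w then phi s0 else 0) + (if Nat.eqb s1 w then - phi s1 else 0))).
       - rewrite sumR_plus, !sumR_single by auto. lra.
       - intros w Hw. unfold supply. destruct (Nat.eqb_spec w s0); destruct (Nat.eqb_spec s0 w);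
         destruct (Nat.eqb_spec w s1); destruct (Nat.eqb_spec s1 w); subst; try lia; try lra. }
  rewrite (sumR_ext n (fun w => phi w * supply s0 s1 w)
     (fun w => sumR m (fun e => phi w * kirchhoff_term ends L (Dt e) pt w e))).
  2: { intros w Hw. rewrite sumR_scal. rewrite Hk by auto. reflexivity. }
  rewrite sumR_swap. apply sumR_ext. intros e He.
  destruct (Hs e He) as [Hu [Hv Huv]].
  set (u := fst (ends e)) in *. set (v := snd (ends e)) in *.
  rewrite (sumR_ext n _ (fun w => (if Nat.eqb u w then phi u * current ends L (Dt e) pt e else 0)
     + (if Nat.eqb v w then - (phi v * current ends L (Dt e) pt e) else 0))).
  - rewrite sumR_plus, !sumR_single by auto. lra.
  - intros w Hw. unfold kirchhoff_term, current. fold u v.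
    destruct (Nat.eqb_spec u w); destruct (Nat.eqb_spec v w); subst; try lia; unfold Rdiv; ring.
Qed.

Lemma walk_edges : forall m ends a c vs es, walk m ends a c vs es -> forall e, In e es -> (e < m)%nat.
Proof. intros m ends a c vs es H; induction H; simpl; intros x Hx; [contradiction|].
  destruct Hx; [subst; auto | auto]. Qed.

Lemma joins_sym : forall ends e a b, joins ends e a b -> joins ends e b a.
Proof. unfold joins; intros; tauto. Qed.

Lemma walk_verts : forall n m ends a c vs es, simple_graph n m ends -> walk m ends a c vs es ->
  (a < n)%nat -> (forall x, In x vs -> (x < n)%nat) /\ (c < n)%nat.
Proof. intros n m ends a c vs es [Hs _] H; induction H; intros Ha.
  - split; auto. simpl; intros x [->|[]]; auto.
  - assert (Hb : (b < n)%nat).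
    { destruct (Hs e H) as [Q1 [Q2 _]]. destruct H0 as [E|E]; rewrite E in *; simpl in *; auto. }
    destruct (IHwalk Hb) as [IH1 IH2]. split; auto. simpl. intros x [->|Hx]; auto. Qed.

Lemma walk_len : forall m ends a c vs es, walk m ends a c vs es -> length vs = S (length es).
Proof. intros m ends a c vs es H; induction H; simpl; auto. Qed.

Lemma plen_app : forall L l1 l2, path_length L (l1 ++ l2) = path_length L l1 + path_length L l2.
Proof. induction l1; intros; simpl; [lra|]. rewrite IHl1. lra. Qed.

Lemma plen_rev : forall L l, path_length L (rev l) = path_length L l.
Proof. induction l; simpl; auto. rewrite plen_app. simpl. rewrite IHl. lra. Qed.

Lemma plen_nonneg : forall m (L : nat -> R) l, (forall e, (e < m)%nat -> L e > 0) ->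
  (forall e, In e l -> (e < m)%nat) -> 0 <= path_length L l.
Proof. induction l; intros HL Hl; simpl; [lra|].
  assert (L a > 0) by (apply HL, Hl; simpl; auto).
  assert (0 <= path_length L l) by (apply IHl; auto; intros; apply Hl; simpl; auto). lra. Qed.

Lemma walk_snoc : forall m ends a b vs es e c, walk m ends a b vs es -> (e < m)%nat ->
  joins ends e b c -> walk m ends a c (vs ++ [c]) (es ++ [e]).
Proof. intros m ends a b vs es e c H; induction H; intros He Hj; simpl.
  - econstructor; eauto. constructor.
  - econstructor; eauto. Qed.

Lemma walk_app : forall m ends a b vs1 es1, walk m ends a b vs1 es1 ->
  forall c vs2 es2, walk m ends b c vs2 es2 -> exists vs, walk m ends a c vs (es1 ++ es2).
Proof. intros m ends a b vs1 es1 H; induction H; intros c' vs2 es2 H2; simpl.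
  - eauto.
  - destruct (IHwalk _ _ _ H2) as [vs' Hw]. eexists. econstructor; eauto. Qed.

Lemma walk_rev : forall m ends a c vs es, walk m ends a c vs es -> walk m ends c a (rev vs) (rev es).
Proof. intros m ends a c vs es H; induction H; simpl.
  - constructor.
  - eapply walk_snoc; eauto. apply joins_sym; auto. Qed.

Lemma walk_suffix : forall m ends (L : nat -> R), (forall e, (e < m)%nat -> L e > 0) ->
  forall a c vs es, walk m ends a c vs es -> forall x, In x vs ->
  exists vs2 es2, walk m ends x c vs2 es2 /\ (NoDup vs -> NoDup vs2) /\
    path_length L es2 <= path_length L es.
Proof. intros m ends L HL a c vs es H; induction H; intros x Hx.
  - destruct Hx as [<-|[]]. exists [a], []. split; [constructor|]. split; auto. lra.
  - destruct (Nat.eq_dec x a).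
    + subst. exists (a :: vs), (e :: es). split; [econstructor; eauto|]. split; auto. lra.
    + destruct Hx as [Hx|Hx]; [congruence|].
      destruct (IHwalk x Hx) as [vs2 [es2 [W [ND Hl]]]].
      exists vs2, es2. split; auto. split.
      * intros Hn. apply ND. inversion Hn; auto.
      * simpl. assert (L e > 0) by (apply HL; auto). lra. Qed.

Lemma walk_strict : forall m ends (L : nat -> R), (forall e, (e < m)%nat -> L e > 0) ->
  forall a c vs es, walk m ends a c vs es ->
  NoDup vs \/ exists es', path m ends a c es' /\ path_length L es' < path_length L es.
Proof. intros m ends L HL a c vs es H; induction H.
  - left. constructor; [simpl; auto| constructor].
  - assert (HLe : L e > 0) by (apply HL; auto).
    destruct IHwalk as [ND | [es' [[vs' [W' ND']] Hl]]].
    + destruct (in_dec Nat.eq_dec a vs).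
      * right. destruct (walk_suffix m ends L HL _ _ _ _ H1 a i) as [vs2 [es2 [W2 [ND2 Hl2]]]].
        exists es2. split; [exists vs2; auto|]. simpl. lra.
      * left. constructor; auto.
    + right. destruct (in_dec Nat.eq_dec a vs').
      * destruct (walk_suffix m ends L HL _ _ _ _ W' a i) as [vs2 [es2 [W2 [ND2 Hl2]]]].
        exists es2. split; [exists vs2; auto|]. simpl.
        assert (0 <= path_length L es) by (apply (plen_nonneg m); auto; eapply walk_edges; eauto). lra.
      * exists (e :: es'). split.
        -- exists (a :: vs'). split; [econstructor; eauto| constructor; auto].
        -- simpl. lra. Qed.

Lemma walk_to_path : forall m ends (L : nat -> R), (forall e, (e < m)%nat -> L e > 0) ->
  forall a c vs es, walk m ends a c vs es ->
  exists es', path m ends a c es' /\ path_length L es' <= path_length L es.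
Proof. intros. destruct (walk_strict m ends L H _ _ _ _ H0) as [ND | [es' [P Hl]]].
  - exists es. split; [exists vs; auto| lra].
  - exists es'. split; auto; lra. Qed.

Lemma path_bound : forall n m ends a c es, simple_graph n m ends -> (a < n)%nat ->
  path m ends a c es -> (length es <= n)%nat /\ (forall e, In e es -> (e < m)%nat).
Proof. intros n m ends a c es Hs Ha [vs [W ND]]. split; [|eapply walk_edges; eauto].
  destruct (walk_verts n m ends a c vs es Hs W Ha) as [Hv _].
  assert (length vs <= length (seq 0 n))%nat.
  { apply NoDup_incl_length; auto. intros x Hx. apply in_seq. specialize (Hv x Hx). lia. }
  rewrite length_seq in H. apply walk_len in W. lia. Qed.

Fixpoint lists_upto (m k : nat) : list (list nat) :=
  match k with
  | O => [nil]
  | S k' => nil :: flat_map (fun l => map (fun e => e :: l) (seq 0 m)) (lists_upto m k')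
  end.

Lemma lists_upto_spec : forall m k l, (length l <= k)%nat -> (forall e, In e l -> (e < m)%nat) ->
  In l (lists_upto m k).
Proof. induction k; intros l Hl He; destruct l as [|x l]; simpl in *; auto; try lia.
  right. apply in_flat_map. exists l. split.
  - apply IHk; [lia| intros; apply He; auto].
  - apply in_map_iff. exists x. split; auto. apply in_seq. assert (x < m)%nat by (apply He; auto). lia. Qed.

Lemma exists_min : forall (A : Type) (f : A -> R) (P : A -> Prop) (lst : list A),
  (exists x, P x /\ In x lst) ->
  exists x, P x /\ In x lst /\ forall y, P y -> In y lst -> f x <= f y.
Proof. intros A f P lst; induction lst as [|a lst IH]; intros [x [Px Hx]]; [destruct Hx|].
  destruct (classic (exists x, P x /\ In x lst)) as [Hex|Hno].
  - destruct (IH Hex) as [z [Pz [Iz Hz]]].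
    destruct (classic (P a)) as [Pa|nPa].
    + destruct (Rle_dec (f a) (f z)).
      * exists a. split; auto. split; [simpl; auto|]. intros y Py [<-|Iy]; [lra|].
        specialize (Hz y Py Iy). lra.
      * exists z. split; auto. split; [simpl; auto|]. intros y Py [<-|Iy]; [lra|]. auto.
    + exists z. split; auto. split; [simpl; auto|]. intros y Py [<-|Iy]; [contradiction|]. auto.
  - exists a. destruct Hx as [<-|Hx]; [|exfalso; apply Hno; eauto].
    split; auto. split; [simpl; auto|]. intros y Py [<-|Iy]; [lra|]. exfalso; apply Hno; eauto. Qed.

Lemma dist_spec : forall n m ends (L : nat -> R), simple_graph n m ends -> connected n m ends ->
  (forall e, (e < m)%nat -> L e > 0) ->
  forall a w, (a < n)%nat -> (w < n)%nat ->
  exists x, (exists es, path m ends a w es /\ path_length L es = x) /\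
            forall es, path m ends a w es -> x <= path_length L es.
Proof. intros n m ends L Hs Hc HL a w Ha Hw.
  destruct (Hc a w Ha Hw) as [vs [es W]].
  destruct (walk_to_path m ends L HL _ _ _ _ W) as [es0 [P0 _]].
  destruct (exists_min (list nat) (path_length L) (path m ends a w) (lists_upto m n)) as [x [Px [Ix Hx]]].
  { exists es0. split; auto. destruct (path_bound n m ends a w es0 Hs Ha P0). apply lists_upto_spec; auto. }
  exists (path_length L x). split; [eauto|]. intros es' P'. apply Hx; auto.
  destruct (path_bound n m ends a w es' Hs Ha P'). apply lists_upto_spec; auto. Qed.

Definition dspec m ends (L : nat -> R) a w x :=
  (exists es, path m ends a w es /\ path_length L es = x) /\
  forall es, path m ends a w es -> x <= path_length L es.

Lemma dist_fun : forall n m ends (L : nat -> R), simple_graph n m ends -> connected n m ends ->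
  (forall e, (e < m)%nat -> L e > 0) -> forall a, (a < n)%nat ->
  exists f : nat -> R, forall w, (w < n)%nat -> dspec m ends L a w (f w).
Proof. intros n m ends L Hs Hc HL a Ha.
  assert (H : forall w, exists x, (w < n)%nat -> dspec m ends L a w x).
  { intros w. destruct (lt_dec w n).
    - destruct (dist_spec n m ends L Hs Hc HL a w Ha l) as [x Hx]. exists x; auto.
    - exists 0. intros; lia. }
  exists (fun w => proj1_sig (constructive_indefinite_description _ (H w))).
  intros w Hw. destruct (constructive_indefinite_description _ (H w)); simpl; auto. Qed.

Lemma path_rev : forall m ends a c es, path m ends a c es -> path m ends c a (rev es).
Proof. intros m ends a c es [vs [W ND]]. exists (rev vs). split.
  - apply walk_rev; auto.
  - apply NoDup_rev; auto. Qed.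

Lemma dist_lip : forall m ends (L : nat -> R) a e u v du dv, (forall e, (e < m)%nat -> L e > 0) ->
  dspec m ends L a u du -> dspec m ends L a v dv -> (e < m)%nat -> joins ends e u v ->
  dv <= du + L e.
Proof. intros m ends L a e u v du dv HL [[es [[vs [W _]] Hl]] _] [_ Hv] He Hj.
  pose proof (walk_snoc m ends a u vs es e v W He Hj) as W2.
  destruct (walk_to_path m ends L HL _ _ _ _ W2) as [es' [P' Hl']].
  specialize (Hv es' P'). rewrite plen_app in Hl'. simpl in Hl'. lra. Qed.

Lemma dist_self : forall m ends (L : nat -> R) a x, (forall e, (e < m)%nat -> L e > 0) ->
  dspec m ends L a a x -> x = 0.
Proof. intros m ends L a x HL [[es [[vs [W _]] Hl]] Hx].
  assert (0 <= path_length L es) by (apply (plen_nonneg m); auto; eapply walk_edges; eauto).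
  assert (x <= path_length L []).
  { apply Hx. exists [a]. split; [constructor| constructor; [simpl; auto|constructor]]. }
  simpl in H0. lra. Qed.

Lemma through_edge : forall m ends (L : nat -> R) s0 s1 e x y dx dy Ls,
  (forall e, (e < m)%nat -> L e > 0) -> (e < m)%nat -> joins ends e x y ->
  dspec m ends L s0 x dx -> dspec m ends L s1 y dy ->
  (forall es, path m ends s0 s1 es -> Ls <= path_length L es) ->
  ~ on_shortest_path m ends L s0 s1 e -> dx + L e + dy > Ls.
Proof. intros m ends L s0 s1 e x y dx dy Ls HL He Hj [[es1 [[vs1 [W1 _]] Hl1]] _]
   [[es2 [P2 Hl2]] _] HLs Hno.
  apply Rnot_le_lt. intro Hle.
  pose proof (walk_snoc m ends s0 x vs1 es1 e y W1 He Hj) as W1'.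
  destruct (path_rev _ _ _ _ _ P2) as [vs2 [W2 _]].
  destruct (walk_app _ _ _ _ _ _ W1' _ _ _ W2) as [vs W].
  assert (Hlen : path_length L ((es1 ++ [e]) ++ rev es2) = dx + L e + dy).
  { rewrite !plen_app, plen_rev. simpl. lra. }
  destruct (walk_strict m ends L HL _ _ _ _ W) as [ND | [es' [P' Hl']]].
  - apply Hno. exists ((es1 ++ [e]) ++ rev es2). split.
    + split; [exists vs; auto|]. intros es' P'. specialize (HLs es' P'). lra.
    + apply in_or_app; left; apply in_or_app; right; simpl; auto.
  - specialize (HLs es' P'). lra. Qed.

Lemma distances : forall n m ends (L : nat -> R) s0 s1,
  simple_graph n m ends -> connected n m ends -> (forall e, (e < m)%nat -> L e > 0) ->
  (s0 < n)%nat -> (s1 < n)%nat ->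
  exists (d d' : nat -> R) (Ls : R) (P : list nat),
    path m ends s0 s1 P /\ path_length L P = Ls /\
    d s0 = 0 /\ d s1 = Ls /\ d' s1 = 0 /\ d' s0 = Ls /\
    (forall e, (e < m)%nat -> Rabs (d (fst (ends e)) - d (snd (ends e))) <= L e) /\
    (forall e, (e < m)%nat -> Rabs (d' (fst (ends e)) - d' (snd (ends e))) <= L e) /\
    (forall w, (w < n)%nat -> d w + d' w >= Ls) /\
    (forall e, (e < m)%nat -> ~ on_shortest_path m ends L s0 s1 e ->
        d (fst (ends e)) + L e + d' (snd (ends e)) > Ls /\
        d (snd (ends e)) + L e + d' (fst (ends e)) > Ls).
Proof.
  intros n m ends L s0 s1 Hs Hc HL Hs0 Hs1.
  destruct (dist_fun n m ends L Hs Hc HL s0 Hs0) as [d Hd].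
  destruct (dist_fun n m ends L Hs Hc HL s1 Hs1) as [d' Hd'].
  pose proof (Hd s1 Hs1) as [[P [HP HPl]] HPmin].
  exists d, d', (d s1), P.
  assert (Hlip : forall f a, (forall w, (w < n)%nat -> dspec m ends L a w (f w)) ->
     forall e, (e < m)%nat -> Rabs (f (fst (ends e)) - f (snd (ends e))) <= L e).
  { intros f a Hf e He. destruct (proj1 Hs e He) as [Hu [Hv _]].
    assert (J : joins ends e (fst (ends e)) (snd (ends e))) by (left; destruct (ends e); auto).
    pose proof (dist_lip m ends L a e _ _ _ _ HL (Hf _ Hu) (Hf _ Hv) He J).
    pose proof (dist_lip m ends L a e _ _ _ _ HL (Hf _ Hv) (Hf _ Hu) He (joins_sym _ _ _ _ J)).
    apply Rabs_le. lra. }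
  assert (Hd's0 : d' s0 = d s1).
  { destruct (Hd' s0 Hs0) as [[Q [HQ HQl]] HQmin].
    pose proof (HPmin _ (path_rev _ _ _ _ _ HQ)). rewrite plen_rev in H.
    pose proof (HQmin _ (path_rev _ _ _ _ _ HP)). rewrite plen_rev in H0. lra. }
  split; auto. split; auto.
  split; [apply (dist_self m ends L s0); auto|].
  split; auto.
  split; [apply (dist_self m ends L s1); auto|].
  split; auto.
  split; [apply (Hlip d s0); auto|].
  split; [apply (Hlip d' s1); auto|].
  split.
  - intros w Hw. destruct (Hd w Hw) as [[es1 [[vs1 [W1 _]] Hl1]] _].
    destruct (Hd' w Hw) as [[es2 [P2 Hl2]] _].
    destruct (path_rev _ _ _ _ _ P2) as [vs2 [W2 _]].
    destruct (walk_app _ _ _ _ _ _ W1 _ _ _ W2) as [vs W].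
    destruct (walk_to_path m ends L HL _ _ _ _ W) as [es' [P' Hl']].
    specialize (HPmin es' P'). rewrite plen_app, plen_rev in Hl'. lra.
  - intros e He Hno. destruct (proj1 Hs e He) as [Hu [Hv _]].
    assert (J : joins ends e (fst (ends e)) (snd (ends e))) by (left; destruct (ends e); auto).
    split.
    + apply (through_edge m ends L s0 s1 e _ _ _ _ _ HL He J (Hd _ Hu) (Hd' _ Hv) HPmin Hno).
    + apply (through_edge m ends L s0 s1 e _ _ _ _ _ HL He (joins_sym _ _ _ _ J) (Hd _ Hv) (Hd' _ Hu) HPmin Hno). Qed.

Lemma current_sign : forall ends (L : nat -> R) De pt e, De > 0 -> L e > 0 ->
  (current ends L De pt e > 0 -> pt (fst (ends e)) > pt (snd (ends e))) /\
  (current ends L De pt e < 0 -> pt (fst (ends e)) < pt (snd (ends e))) /\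
  (pt (fst (ends e)) > pt (snd (ends e)) -> current ends L De pt e > 0) /\
  (pt (fst (ends e)) < pt (snd (ends e)) -> current ends L De pt e < 0).
Proof. intros ends L De pt e HD HL. unfold current.
  set (x := pt (fst (ends e)) - pt (snd (ends e))).
  assert (E : De * x / L e = x * (De / L e)) by (unfold Rdiv; ring). rewrite E.
  assert (P : De / L e > 0) by (apply Rdiv_lt_0_compat; lra).
  repeat split; intros H.
  - destruct (Rle_dec x 0); [|unfold x in *; lra]. assert (x * (De / L e) <= 0) by nra. lra.
  - destruct (Rle_dec 0 x); [|unfold x in *; lra]. assert (0 <= x * (De / L e)) by nra. lra.
  - unfold x in *; nra.
  - unfold x in *; nra. Qed.

Lemma Q_le_1 : forall n m ends L s0 s1 (Dt : nat -> R) pt,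
  simple_graph n m ends -> (s0 < n)%nat -> (s1 < n)%nat -> s0 <> s1 ->
  (forall e, (e < m)%nat -> L e > 0) -> (forall e, (e < m)%nat -> Dt e > 0) ->
  potentials n m ends L s0 s1 Dt pt ->
  forall e0, (e0 < m)%nat -> Rabs (current ends L (Dt e0) pt e0) <= 1.
Proof.
  intros n m ends L s0 s1 Dt pt Hs Hs0 Hs1 Hs01 HL HD Hp e0 He0.
  set (Q := fun e => current ends L (Dt e) pt e).
  assert (gen : forall th, Q e0 * ((if Rle_dec th (pt (fst (ends e0))) then 1 else 0) -
                      (if Rle_dec th (pt (snd (ends e0))) then 1 else 0)) <= 1).
  { intros th. set (phi := fun w => if Rle_dec th (pt w) then 1 else 0).
    pose proof (flow_identity n m ends L s0 s1 Dt pt phi Hs Hs0 Hs1 Hs01 Hp) as F.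
    assert (Hnn : forall e, (e < m)%nat -> 0 <= current ends L (Dt e) pt e * (phi (fst (ends e)) - phi (snd (ends e)))).
    { intros e He. destruct (current_sign ends L (Dt e) pt e (HD e He) (HL e He)) as [A [B _]].
      unfold phi. set (c := current ends L (Dt e) pt e) in *.
      destruct (Rle_dec th (pt (fst (ends e)))); destruct (Rle_dec th (pt (snd (ends e))));
      destruct (Rtotal_order c 0) as [Hc|[Hc|Hc]]; try (specialize (A Hc)); try (specialize (B Hc)); nra. }
    pose proof (sumR_ge_term m _ e0 Hnn He0).
    assert (phi s0 - phi s1 <= 1) by (unfold phi; destruct (Rle_dec th (pt s0)); destruct (Rle_dec th (pt s1)); lra).
    unfold Q, phi in *. lra. }
  destruct (current_sign ends L (Dt e0) pt e0 (HD e0 He0) (HL e0 He0)) as [A [B _]].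
  fold (Q e0) in A, B.
  destruct (Rtotal_order (Q e0) 0) as [Hc|[Hc|Hc]].
  - specialize (B Hc). specialize (gen (pt (snd (ends e0)))).
    destruct (Rle_dec (pt (snd (ends e0))) (pt (fst (ends e0)))); [lra|].
    destruct (Rle_dec (pt (snd (ends e0))) (pt (snd (ends e0)))); [|lra].
    unfold Q in *. rewrite Rabs_left by lra. lra.
  - unfold Q in *. rewrite Hc, Rabs_R0. lra.
  - specialize (A Hc). specialize (gen (pt (fst (ends e0)))).
    destruct (Rle_dec (pt (fst (ends e0))) (pt (fst (ends e0)))); [|lra].
    destruct (Rle_dec (pt (fst (ends e0))) (pt (snd (ends e0)))); [lra|].
    unfold Q in *. rewrite Rabs_right by lra. lra.
Qed.

Lemma Rabs_le_between : forall x b, Rabs x <= b -> - b <= x <= b.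
Proof. intros x b H. unfold Rabs in H. destruct (Rcase_abs x); lra. Qed.

Lemma tau_nonneg : forall q L du dv du' dv',
  Rabs (du - dv) <= L -> Rabs (du' - dv') <= L ->
  0 <= 2 * L * Rabs q + q * (du - dv) - q * (du' - dv').
Proof. intros. apply Rabs_le_between in H. apply Rabs_le_between in H0.
  destruct (Rle_dec 0 q); [rewrite Rabs_right by lra | rewrite Rabs_left by lra]; nra. Qed.

Lemma tau_h0 : forall q L du dv du' dv' Ls,
  Rabs (du - dv) <= L -> Rabs (du' - dv') <= L -> du + du' - Ls = 0 ->
  Rabs q * (dv + dv' - Ls) <= 2 * L * Rabs q + q * (du - dv) - q * (du' - dv').
Proof. intros. apply Rabs_le_between in H. apply Rabs_le_between in H0.
  destruct (Rle_dec 0 q); [rewrite Rabs_right by lra | rewrite Rabs_left by lra]; nra. Qed.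

Lemma tau_both0 : forall q L du dv du' dv' Ls nu,
  du + du' - Ls = 0 -> dv + dv' - Ls = 0 ->
  nu <= du + L + dv' - Ls -> nu <= dv + L + du' - Ls ->
  2 * Rabs q * nu <= 2 * L * Rabs q + q * (du - dv) - q * (du' - dv').
Proof. intros.
  destruct (Rle_dec 0 q); [rewrite Rabs_right by lra | rewrite Rabs_left by lra].
  - assert (0 <= q * (du + L + dv' - Ls - nu)) by (apply Rmult_le_pos; lra).
    assert (E1 : du' = Ls - du) by lra. assert (E2 : dv = Ls - dv') by lra. rewrite E1, E2. 
    replace (2 * L * q + q * (du - (Ls - dv')) - q * (Ls - du - dv')) with (2 * (q * (du + L + dv' - Ls - nu)) + 2 * q * nu) by ring. lra.
  - assert (0 <= (-q) * (dv + L + du' - Ls - nu)) by (apply Rmult_le_pos; lra).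
    assert (E1 : du = Ls - du') by lra. assert (E2 : dv' = Ls - dv) by lra. rewrite E1, E2. 
    replace (2 * L * - q + q * (Ls - du' - dv) - q * (du' - (Ls - dv))) with (2 * ((-q) * (dv + L + du' - Ls - nu)) + 2 * (-q) * nu) by ring. lra. Qed.

Lemma cut_sum : forall m (f tau : nat -> R) delta e0,
  sumR m f = 0 -> (forall e, (e < m)%nat -> 0 <= tau e) ->
  (forall e, (e < m)%nat -> f e < 0 -> delta * (- f e) <= tau e) -> 0 <= delta -> (e0 < m)%nat ->
  delta * f e0 <= sumR m tau.
Proof. intros m f tau delta e0 Hf Ht Hn Hd He0.
  assert (A : sumR m tau >= delta * sumR m (fun e => Rmax 0 (- f e))).
  { rewrite <- sumR_scal. apply Rle_ge, sumR_le. intros e He. unfold Rmax.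
    destruct (Rle_dec 0 (- f e)).
    - destruct (Rlt_dec (f e) 0); [apply Hn; auto|]. replace (- f e) with 0 by lra. rewrite Rmult_0_r; auto.
    - rewrite Rmult_0_r; auto. }
  assert (B : sumR m (fun e => Rmax 0 (- f e)) = sumR m (fun e => Rmax 0 (f e))).
  { assert (sumR m (fun e => Rmax 0 (f e) - Rmax 0 (- f e)) = sumR m f).
    { apply sumR_ext. intros. unfold Rmax. destruct (Rle_dec 0 (f i)); destruct (Rle_dec 0 (- f i)); lra. }
    rewrite sumR_minus in H. lra. }
  assert (C : Rmax 0 (f e0) <= sumR m (fun e => Rmax 0 (f e))).
  { apply (sumR_ge_term m (fun e => Rmax 0 (f e))); auto. intros; apply Rmax_l. }
  assert (f e0 <= Rmax 0 (f e0)) by apply Rmax_r.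
  rewrite B in A. nra. Qed.

Definition ind1 (px h p : R) : R := if Rlt_dec 0 h then if Rle_dec px p then 1 else 0 else 0.
Definition ind2 (py h p : R) : R := if Rlt_dec 0 h then if Rle_dec p py then -1 else 0 else 0.

Lemma edge_case1 : forall q pu pv hu hv px tau delta,
  (q > 0 -> pu > pv) -> (q < 0 -> pu < pv) -> 0 <= hu -> 0 <= hv ->
  (0 < hu -> delta <= hu) -> (0 < hv -> delta <= hv) ->
  (hu = 0 -> Rabs q * hv <= tau) -> (hv = 0 -> Rabs q * hu <= tau) -> 0 < delta ->
  q * (ind1 px hu pu - ind1 px hv pv) < 0 -> delta * (- (q * (ind1 px hu pu - ind1 px hv pv))) <= tau.
Proof. intros q pu pv hu hv px tau delta A B Hu Hv Du Dv Tu Tv Hd.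
  unfold ind1. destruct (Rlt_dec 0 hu); destruct (Rlt_dec 0 hv);
  try destruct (Rle_dec px pu); try destruct (Rle_dec px pv); intro Hf;
  destruct (Rtotal_order q 0) as [Hq|[Hq|Hq]]; try (subst q; lra);
  try (specialize (A Hq)); try (specialize (B Hq)); try lra;
  try (rewrite Rabs_right in * by lra); try (rewrite Rabs_left in * by lra).
  all: try (assert (hu = 0) by lra); try (assert (hv = 0) by lra).
  all: try (specialize (Tu ltac:(lra))); try (specialize (Tv ltac:(lra))).
  all: try (specialize (Du ltac:(lra))); try (specialize (Dv ltac:(lra))).
  all: nra.
Qed.

Lemma edge_case2 : forall q pu pv hu hv py tau delta,
  (q > 0 -> pu > pv) -> (q < 0 -> pu < pv) -> 0 <= hu -> 0 <= hv ->
  (0 < hu -> delta <= hu) -> (0 < hv -> delta <= hv) ->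
  (hu = 0 -> Rabs q * hv <= tau) -> (hv = 0 -> Rabs q * hu <= tau) -> 0 < delta ->
  q * (ind2 py hu pu - ind2 py hv pv) < 0 -> delta * (- (q * (ind2 py hu pu - ind2 py hv pv))) <= tau.
Proof. intros q pu pv hu hv py tau delta A B Hu Hv Du Dv Tu Tv Hd.
  unfold ind2. destruct (Rlt_dec 0 hu); destruct (Rlt_dec 0 hv);
  try destruct (Rle_dec pu py); try destruct (Rle_dec pv py); intro Hf;
  destruct (Rtotal_order q 0) as [Hq|[Hq|Hq]]; try (subst q; lra);
  try (specialize (A Hq)); try (specialize (B Hq)); try lra;
  try (rewrite Rabs_right in * by lra); try (rewrite Rabs_left in * by lra).
  all: try (assert (hu = 0) by lra); try (assert (hv = 0) by lra).
  all: try (specialize (Tu ltac:(lra))); try (specialize (Tv ltac:(lra))).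
  all: try (specialize (Du ltac:(lra))); try (specialize (Dv ltac:(lra))).
  all: nra.
Qed.

Lemma min_pos : forall (h : nat -> R) n, exists delta, delta > 0 /\
  forall w, (w < n)%nat -> h w > 0 -> delta <= h w.
Proof. intros h n; induction n.
  - exists 1. split; [lra|]. intros; lia.
  - destruct IHn as [d [Hd H]]. destruct (Rlt_dec 0 (h n)).
    + exists (Rmin d (h n)). split; [apply Rmin_pos; lra|]. intros w Hw Hh.
      destruct (Nat.eq_dec w n); [subst; apply Rmin_r|].
      eapply Rle_trans; [apply Rmin_l| apply H; auto; lia].
    + exists d. split; auto. intros w Hw Hh. destruct (Nat.eq_dec w n); [subst; lra|]. apply H; auto; lia.
Qed.

Lemma cost_bound : forall n m ends (L : nat -> R) s0 s1 (d d' : nat -> R) Ls e0,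
  simple_graph n m ends -> (s0 < n)%nat -> (s1 < n)%nat -> s0 <> s1 ->
  (forall e, (e < m)%nat -> L e > 0) ->
  d s0 = 0 -> d s1 = Ls -> d' s1 = 0 -> d' s0 = Ls ->
  (forall e, (e < m)%nat -> Rabs (d (fst (ends e)) - d (snd (ends e))) <= L e) ->
  (forall e, (e < m)%nat -> Rabs (d' (fst (ends e)) - d' (snd (ends e))) <= L e) ->
  (forall w, (w < n)%nat -> d w + d' w >= Ls) ->
  (e0 < m)%nat ->
  d (fst (ends e0)) + L e0 + d' (snd (ends e0)) > Ls ->
  d (snd (ends e0)) + L e0 + d' (fst (ends e0)) > Ls ->
  exists kappa, kappa > 0 /\ forall (Dt : nat -> R) pt, (forall e, (e < m)%nat -> Dt e > 0) ->
    potentials n m ends L s0 s1 Dt pt ->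
    Ls + kappa * Rabs (current ends L (Dt e0) pt e0) <=
      sumR m (fun e => L e * Rabs (current ends L (Dt e) pt e)).
Proof.
  intros n m ends L s0 s1 d d' Ls e0 Hs Hs0 Hs1 Hs01 HL Hd0 Hd1 Hd'1 Hd'0 Hlip Hlip' Hh He0 Hn1 Hn2.
  set (h := fun w => d w + d' w - Ls).
  destruct (min_pos h n) as [delta [Hdel Hdelh]].
  set (u0 := fst (ends e0)) in *. set (v0 := snd (ends e0)) in *.
  set (nu := Rmin (d u0 + L e0 + d' v0 - Ls) (d v0 + L e0 + d' u0 - Ls)).
  assert (Hnu : nu > 0) by (apply Rmin_pos; lra).
  exists (Rmin delta nu / 2). split; [assert (Rmin delta nu > 0) by (apply Rmin_pos; lra); lra|].
  intros Dt pt HD Hp.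
  set (Q := fun e => current ends L (Dt e) pt e).
  set (tau := fun e => 2 * L e * Rabs (Q e) + Q e * (d (fst (ends e)) - d (snd (ends e)))
                       - Q e * (d' (fst (ends e)) - d' (snd (ends e)))).
  assert (Hsum : sumR m tau = 2 * sumR m (fun e => L e * Rabs (Q e)) - 2 * Ls).
  { unfold tau. rewrite sumR_minus, sumR_plus.
    rewrite (sumR_ext m (fun e => 2 * L e * Rabs (Q e)) (fun e => 2 * (L e * Rabs (Q e)))) by (intros; ring).
    rewrite sumR_scal.
    unfold Q. rewrite !(flow_identity n m ends L s0 s1 Dt pt) by auto. lra. }
  assert (Hend : forall e, (e < m)%nat -> (fst (ends e) < n)%nat /\ (snd (ends e) < n)%nat).
  { intros e He. destruct (proj1 Hs e He) as [A [B _]]; auto. }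
  assert (Ht0 : forall e, (e < m)%nat -> 0 <= tau e).
  { intros e He. unfold tau. apply tau_nonneg; auto. }
  assert (Hh0 : forall w, (w < n)%nat -> 0 <= h w) by (intros w Hw; unfold h; specialize (Hh w Hw); lra).
  assert (Hhs0 : h s0 = 0) by (unfold h; lra).
  assert (Hhs1 : h s1 = 0) by (unfold h; lra).
  assert (Tu : forall e, (e < m)%nat -> h (fst (ends e)) = 0 -> Rabs (Q e) * h (snd (ends e)) <= tau e).
  { intros e He H0. unfold tau, h in *. apply tau_h0; auto. }
  assert (Tv : forall e, (e < m)%nat -> h (snd (ends e)) = 0 -> Rabs (Q e) * h (fst (ends e)) <= tau e).
  { intros e He H0. unfold tau, h in *.
    pose proof (tau_h0 (- Q e) (L e) (d (snd (ends e))) (d (fst (ends e)))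
                 (d' (snd (ends e))) (d' (fst (ends e))) Ls) as T.
    rewrite Rabs_Ropp, Rabs_minus_sym, (Rabs_minus_sym (d' _)) in T.
    specialize (T (Hlip e He) (Hlip' e He) H0). nra. }
  assert (Sg : forall e, (e < m)%nat -> (Q e > 0 -> pt (fst (ends e)) > pt (snd (ends e))) /\
                                     (Q e < 0 -> pt (fst (ends e)) < pt (snd (ends e)))).
  { intros e He. destruct (current_sign ends L (Dt e) pt e (HD e He) (HL e He)) as [A [B _]]. auto. }
  assert (C1 : forall px, delta * (Q e0 * (ind1 px (h u0) (pt u0) - ind1 px (h v0) (pt v0))) <= sumR m tau).
  { intros px. apply (cut_sum m (fun e => Q e * (ind1 px (h (fst (ends e))) (pt (fst (ends e)))
                                       - ind1 px (h (snd (ends e))) (pt (snd (ends e)))))); [ | exact Ht0 | | lra | exact He0].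
    - unfold Q. rewrite (flow_identity n m ends L s0 s1 Dt pt (fun w => ind1 px (h w) (pt w))) by auto.
      unfold ind1. rewrite Hhs0, Hhs1. destruct (Rlt_dec 0 0); lra.
    - intros e He. destruct (Hend e He) as [Hu Hv]. destruct (Sg e He) as [A B].
      apply edge_case1; auto. }
  assert (C2 : forall py, delta * (Q e0 * (ind2 py (h u0) (pt u0) - ind2 py (h v0) (pt v0))) <= sumR m tau).
  { intros py. apply (cut_sum m (fun e => Q e * (ind2 py (h (fst (ends e))) (pt (fst (ends e)))
                                       - ind2 py (h (snd (ends e))) (pt (snd (ends e)))))); [ | exact Ht0 | | lra | exact He0].
    - unfold Q. rewrite (flow_identity n m ends L s0 s1 Dt pt (fun w => ind2 py (h w) (pt w))) by auto.
      unfold ind2. rewrite Hhs0, Hhs1. destruct (Rlt_dec 0 0); lra.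
    - intros e He. destruct (Hend e He) as [Hu Hv]. destruct (Sg e He) as [A B].
      apply edge_case2; auto. }
  enough (Hk : Rmin delta nu * Rabs (Q e0) <= sumR m tau) by (rewrite Hsum in Hk; unfold Q in *; cbv beta in *; lra).
  destruct (Hend e0 He0) as [Hu0 Hv0]. destruct (Sg e0 He0) as [A B]. fold u0 v0 in A, B.
  assert (Hmin1 : Rmin delta nu <= delta) by apply Rmin_l.
  assert (Hmin2 : Rmin delta nu <= nu) by apply Rmin_r.
  assert (Hmin0 : 0 <= Rabs (Q e0)) by apply Rabs_pos.
  destruct (Rtotal_order (Q e0) 0) as [Hq|[Hq|Hq]].
  - specialize (B Hq). rewrite Rabs_left by lra.
    destruct (Rlt_dec 0 (h v0)).
    + specialize (C1 (pt v0)). unfold ind1 in C1.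
      destruct (Rlt_dec 0 (h v0)); [|lra]. destruct (Rle_dec (pt v0) (pt v0)); [|lra].
      destruct (Rlt_dec 0 (h u0)); [destruct (Rle_dec (pt v0) (pt u0)); [lra|]|]; nra.
    + destruct (Rlt_dec 0 (h u0)).
      * specialize (C2 (pt u0)). unfold ind2 in C2.
        destruct (Rlt_dec 0 (h u0)); [|lra]. destruct (Rle_dec (pt u0) (pt u0)); [|lra].
        destruct (Rlt_dec 0 (h v0)); [lra|]. nra.
      * assert (h u0 = 0) by (specialize (Hh0 u0 Hu0); lra).
        assert (h v0 = 0) by (specialize (Hh0 v0 Hv0); lra).
        unfold h in *.
        pose proof (tau_both0 (Q e0) (L e0) (d u0) (d v0) (d' u0) (d' v0) Ls nu H H0
           ltac:(apply Rmin_l) ltac:(apply Rmin_r)).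
        pose proof (sumR_ge_term m tau e0 Ht0 He0). unfold tau in H2 at 1. cbv beta in H2. fold u0 v0 in H2.
        rewrite Rabs_left in H1, H2 by lra.
        assert (Rmin delta nu * (- Q e0) <= nu * (- Q e0)) by (apply Rmult_le_compat_r; [lra | exact Hmin2]).
        assert (0 <= nu * (- Q e0)) by (apply Rmult_le_pos; lra). lra.
  - rewrite Hq, Rabs_R0. rewrite Rmult_0_r. apply sumR_nonneg; auto.
  - specialize (A Hq). rewrite Rabs_right by lra.
    destruct (Rlt_dec 0 (h u0)).
    + specialize (C1 (pt u0)). unfold ind1 in C1.
      destruct (Rlt_dec 0 (h u0)); [|lra]. destruct (Rle_dec (pt u0) (pt u0)); [|lra].
      destruct (Rlt_dec 0 (h v0)); [destruct (Rle_dec (pt u0) (pt v0)); [lra|]|]; nra.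
    + destruct (Rlt_dec 0 (h v0)).
      * specialize (C2 (pt v0)). unfold ind2 in C2.
        destruct (Rlt_dec 0 (h v0)); [|lra]. destruct (Rle_dec (pt v0) (pt v0)); [|lra].
        destruct (Rlt_dec 0 (h u0)); [lra|]. nra.
      * assert (h u0 = 0) by (specialize (Hh0 u0 Hu0); lra).
        assert (h v0 = 0) by (specialize (Hh0 v0 Hv0); lra).
        unfold h in *.
        pose proof (tau_both0 (Q e0) (L e0) (d u0) (d v0) (d' u0) (d' v0) Ls nu H H0
           ltac:(apply Rmin_l) ltac:(apply Rmin_r)).
        pose proof (sumR_ge_term m tau e0 Ht0 He0). unfold tau in H2 at 1. cbv beta in H2. fold u0 v0 in H2.
        rewrite Rabs_right in H1, H2 by lra.
        assert (Rmin delta nu * Q e0 <= nu * Q e0) by (apply Rmult_le_compat_r; [lra | exact Hmin2]).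
        assert (0 <= nu * Q e0) by (apply Rmult_le_pos; lra). lra.
Qed.

Definition lsum (f : nat -> R) (l : list nat) : R := fold_right (fun e acc => f e + acc) 0 l.

Lemma lsum_ext : forall f g l, (forall e, In e l -> f e = g e) -> lsum f l = lsum g l.
Proof. induction l; intros H; simpl; auto. rewrite H by (simpl; auto). rewrite IHl; auto.
  intros; apply H; simpl; auto. Qed.

Lemma lsum_minus : forall f g l, lsum (fun e => f e - g e) l = lsum f l - lsum g l.
Proof. induction l; simpl; [lra|]. rewrite IHl. lra. Qed.

Lemma walk_tele : forall m ends (pt : nat -> R) a c vs es, walk m ends a c vs es ->
  pt a - pt c <= lsum (fun e => Rabs (pt (fst (ends e)) - pt (snd (ends e)))) es.
Proof. intros m ends pt a c vs es H; induction H; simpl.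
  - lra.
  - assert (pt a - pt b <= Rabs (pt (fst (ends e)) - pt (snd (ends e)))).
    { destruct H0 as [E|E]; rewrite E; simpl.
      - apply Rle_abs.
      - rewrite Rabs_minus_sym. apply Rle_abs. }
    lra. Qed.

Lemma static_ineq : forall n m ends (L : nat -> R) s0 s1 P Ls kappa e0 (Dt : nat -> R) pt,
  simple_graph n m ends -> (s0 < n)%nat -> (s1 < n)%nat -> s0 <> s1 ->
  (forall e, (e < m)%nat -> L e > 0) -> (forall e, (e < m)%nat -> Dt e > 0) ->
  potentials n m ends L s0 s1 Dt pt ->
  path m ends s0 s1 P -> path_length L P = Ls ->
  Ls + kappa * Rabs (current ends L (Dt e0) pt e0) <=
      sumR m (fun e => L e * Rabs (current ends L (Dt e) pt e)) ->
  sumR m (fun e => L e * (Rabs (current ends L (Dt e) pt e) - Dt e))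
  - lsum (fun e => L e * ((Rabs (current ends L (Dt e) pt e) - Dt e) / Dt e)) P
  <= - kappa * Rabs (current ends L (Dt e0) pt e0).
Proof.
  intros n m ends L s0 s1 P Ls kappa e0 Dt pt Hs Hs0 Hs1 Hs01 HL HD Hp [vs [W _]] HPl Hk.
  set (Q := fun e => current ends L (Dt e) pt e) in *.
  set (dp := fun e => pt (fst (ends e)) - pt (snd (ends e))).
  assert (HQ : forall e, Q e = Dt e * dp e / L e) by reflexivity.
  assert (HW : lsum (fun e => L e * ((Rabs (Q e) - Dt e) / Dt e)) P = lsum (fun e => Rabs (dp e)) P - Ls).
  { rewrite <- HPl. unfold path_length. fold (lsum L P). rewrite <- lsum_minus. apply lsum_ext.
    intros e He. assert (He' : (e < m)%nat) by (eapply walk_edges; eauto).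
    specialize (HL e He'). specialize (HD e He'). rewrite HQ.
    unfold Rdiv. rewrite Rabs_mult, Rabs_mult, Rabs_right with (r := Dt e) by lra.
    rewrite Rabs_right with (r := / L e) by (apply Rle_ge, Rlt_le, Rinv_0_lt_compat; lra).
    field. lra. }
  pose proof (walk_tele m ends pt s0 s1 vs P W) as Tel. fold dp in Tel.
  destruct Hp as [Hp1 Hk1].
  pose proof (flow_identity n m ends L s0 s1 Dt pt pt Hs Hs0 Hs1 Hs01 (conj Hp1 Hk1)) as FE.
  rewrite Hp1 in FE, Tel. fold Q in FE.
  assert (AM : forall e, (e < m)%nat -> L e * Rabs (Q e) <= (Q e * dp e + L e * Dt e) / 2).
  { intros e He. specialize (HL e He). specialize (HD e He). rewrite HQ.
    unfold Rdiv. rewrite Rabs_mult, Rabs_mult, Rabs_right with (r := Dt e) by lra.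
    rewrite Rabs_right with (r := / L e) by (apply Rle_ge, Rlt_le, Rinv_0_lt_compat; lra).
    assert (Hx : Dt e * dp e * / L e * dp e = Dt e * Rabs (dp e) * Rabs (dp e) / L e).
    { replace (Dt e * Rabs (dp e) * Rabs (dp e)) with (Dt e * (dp e * dp e)).
      - field. lra.
      - rewrite Rmult_assoc, <- Rabs_mult, Rabs_right; [ring|]. apply Rle_ge. nra. }
    rewrite Hx.
    assert (0 <= Dt e * (Rabs (dp e) - L e) * (Rabs (dp e) - L e) / L e).
    { unfold Rdiv. apply Rmult_le_pos; [|apply Rlt_le, Rinv_0_lt_compat; lra].
      rewrite Rmult_assoc. apply Rmult_le_pos; [lra|]. apply Rle_0_sqr. }
    assert (L e * (Dt e * Rabs (dp e) * / L e) = Dt e * Rabs (dp e)) by (field; lra).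
    assert ((Dt e * Rabs (dp e) * Rabs (dp e) / L e + L e * Dt e) / 2 - Dt e * Rabs (dp e)
             = Dt e * (Rabs (dp e) - L e) * (Rabs (dp e) - L e) / L e / 2) by (field; lra).
    lra. }
  assert (AMs : sumR m (fun e => L e * Rabs (Q e)) <=
     (sumR m (fun e => Q e * dp e) + sumR m (fun e => L e * Dt e)) / 2).
  { rewrite <- sumR_plus.
    assert (sumR m (fun e => (Q e * dp e + L e * Dt e) / 2) = sumR m (fun i => Q i * dp i + L i * Dt i) / 2).
    { rewrite (sumR_ext m _ (fun e => / 2 * (Q e * dp e + L e * Dt e))) by (intros; field).
      rewrite sumR_scal. field. }
    rewrite <- H. apply sumR_le. auto. }
  assert (sumR m (fun e => L e * (Rabs (Q e) - Dt e)) = sumR m (fun e => L e * Rabs (Q e)) - sumR m (fun e => L e * Dt e)).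
  { rewrite <- sumR_minus. apply sumR_ext. intros; ring. }
  unfold Q, dp in *. cbv beta in *. lra.
Qed.

Lemma Rabs_le_between' : forall x b, Rabs x <= b -> - b <= x <= b.
Proof. intros x b H. unfold Rabs in H. destruct (Rcase_abs x); lra. Qed.

Lemma ln_le' : forall x y, 0 < x -> x <= y -> ln x <= ln y.
Proof. intros x y Hx Hxy. destruct (Req_dec x y); [subst; lra|].
  left; apply ln_increasing; lra. Qed.

Lemma exp_le' : forall x y, x <= y -> exp x <= exp y.
Proof. intros x y H. destruct (Req_dec x y); [subst; lra|]. left; apply exp_increasing; lra. Qed.

Lemma mono_dec : forall f f' a b, a <= b ->
  (forall c, a <= c <= b -> derivable_pt_lim f c (f' c)) ->
  (forall c, a <= c <= b -> f' c <= 0) -> f b <= f a.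
Proof. intros f f' a b Hab Hd Hn. destruct (Req_dec a b); [subst; lra|].
  destruct (MVT_cor2 f f' a b ltac:(lra) Hd) as [c [Hc Hc2]].
  specialize (Hn c ltac:(lra)). assert (f' c * (b - a) <= 0).
  { assert (0 <= - f' c * (b - a)) by (apply Rmult_le_pos; lra). lra. } lra. Qed.

Lemma lipschitz_of_deriv : forall f f' a Lam,
  (forall c, a <= c -> derivable_pt_lim f c (f' c)) -> (forall c, a <= c -> Rabs (f' c) <= Lam) ->
  forall s t, a <= s -> a <= t -> Rabs (f s - f t) <= Lam * Rabs (s - t).
Proof. intros f f' a Lam Hd Hb.
  assert (K : forall s t, a <= s -> s < t -> Rabs (f s - f t) <= Lam * Rabs (s - t)).
  { intros s t Hs Hst. destruct (MVT_cor2 f f' s t Hst) as [c [Hc Hc2]].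
    { intros c Hc. apply Hd. lra. }
    rewrite Rabs_minus_sym, Hc, (Rabs_minus_sym s t), Rabs_mult.
    apply Rmult_le_compat_r; [apply Rabs_pos| apply Hb; lra]. }
  intros s t Hs Ht. destruct (Rtotal_order s t) as [H|[H|H]].
  - apply K; auto.
  - subst. rewrite !Rminus_diag, Rabs_R0. assert (0 <= Lam) by (eapply Rle_trans; [apply Rabs_pos| apply (Hb t Ht)]). lra.
  - rewrite Rabs_minus_sym, (Rabs_minus_sym s t). apply K; auto. Qed.

Lemma decay : forall (f f' g : R -> R) a k B Lam, k > 0 -> Lam > 0 ->
  (forall t, a <= t -> derivable_pt_lim f t (f' t)) ->
  (forall t, a <= t -> f' t <= - k * g t) ->
  (forall t, a <= t -> 0 <= g t) ->
  (forall t, a <= t -> B <= f t) ->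
  (forall s t, a <= s -> a <= t -> Rabs (g s - g t) <= Lam * Rabs (s - t)) ->
  forall eps, eps > 0 -> exists T, forall t, t >= T -> g t < eps.
Proof.
  intros f f' g a k B Lam Hk HLam Hd Hf' Hg HB Hlip eps Heps.
  apply NNPP. intro Hno.
  assert (Hinf : forall T, exists t, t >= T /\ g t >= eps).
  { intros T. apply NNPP. intro H. apply Hno. exists T. intros t Ht.
    apply Rnot_le_lt. intro H2. apply H. exists t. split; auto; lra. }
  set (delta := eps / (2 * Lam)).
  assert (Hdel : delta > 0) by (unfold delta; apply Rdiv_lt_0_compat; lra).
  set (eta := k * (eps / 2) * delta).
  assert (Heta : eta > 0) by (unfold eta; apply Rmult_lt_0_compat; [apply Rmult_lt_0_compat|]; lra).
  assert (Hmono : forall s t, a <= s <= t -> f t <= f s).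
  { intros s t Hst. apply (mono_dec f f'); [lra| intros; apply Hd; lra|].
    intros c Hc. specialize (Hf' c ltac:(lra)). specialize (Hg c ltac:(lra)). nra. }
  assert (Step : forall N : nat, exists t, a <= t /\ f t <= f a - INR N * eta).
  { induction N.
    - exists a. simpl. split; lra.
    - destruct IHN as [tN [HtN HfN]].
      destruct (Hinf tN) as [t [Ht Hgt]].
      exists (t + delta). split; [lra|].
      destruct (MVT_cor2 f f' t (t + delta) ltac:(lra)) as [c [Hc Hc2]].
      { intros c Hc. apply Hd. lra. }
      assert (Hgc : g c >= eps / 2).
      { specialize (Hlip c t ltac:(lra) ltac:(lra)).
        rewrite Rabs_right with (r := c - t) in Hlip by lra.
        apply Rabs_le_between' in Hlip.
        assert (Lam * (c - t) <= Lam * delta) by (apply Rmult_le_compat_l; lra).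
        assert (Lam * delta = eps / 2) by (unfold delta; field; lra). lra. }
      specialize (Hf' c ltac:(lra)).
      assert (f' c <= - k * (eps / 2)) by nra.
      assert (f' c * delta <= - eta) by (unfold eta; nra).
      specialize (Hmono tN t ltac:(lra)).
      rewrite S_INR. lra. }
  destruct (INR_archimed eta (f a - B) Heta) as [N HN].
  destruct (Step N) as [t [Ht Hft]]. specialize (HB t Ht). lra.
Qed.

Lemma deriv_sumR : forall m (F F' : nat -> R -> R) t,
  (forall e, (e < m)%nat -> derivable_pt_lim (F e) t (F' e t)) ->
  derivable_pt_lim (fun s => sumR m (fun e => F e s)) t (sumR m (fun e => F' e t)).
Proof. induction m; intros F F' t H; simpl.
  - apply (derivable_pt_lim_const 0).
  - apply (derivable_pt_lim_plus (fun s => sumR m (fun e => F e s)) (F m)).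
    + apply IHm. intros; apply H; lia.
    + apply H; lia. Qed.

Lemma deriv_lsum : forall l (F F' : nat -> R -> R) t,
  (forall e, In e l -> derivable_pt_lim (F e) t (F' e t)) ->
  derivable_pt_lim (fun s => lsum (fun e => F e s) l) t (lsum (fun e => F' e t) l).
Proof. induction l; intros F F' t H; simpl.
  - apply (derivable_pt_lim_const 0).
  - apply (derivable_pt_lim_plus (F a) (fun s => lsum (fun e => F e s) l)).
    + apply H; simpl; auto.
    + apply IHl. intros; apply H; simpl; auto. Qed.

Lemma deriv_scal : forall c (f : R -> R) t l, derivable_pt_lim f t l ->
  derivable_pt_lim (fun s => c * f s) t (c * l).
Proof. intros. apply (derivable_pt_lim_scal f c t l H). Qed.

Lemma deriv_ln_comp : forall (f : R -> R) t l, f t > 0 -> derivable_pt_lim f t l ->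
  derivable_pt_lim (fun s => ln (f s)) t (l / f t).
Proof. intros f t l Hp H.
  pose proof (derivable_pt_lim_comp f ln t l (/ f t) H (derivable_pt_lim_ln (f t) Hp)).
  unfold comp in H0. replace (l / f t) with (/ f t * l) by (unfold Rdiv; ring). exact H0. Qed.

Lemma deriv_mult_exp : forall (f : R -> R) t l c,
  derivable_pt_lim f t l ->
  derivable_pt_lim (fun s => (f s - c) * exp s) t (l * exp t + (f t - c) * exp t).
Proof. intros f t l c H.
  apply (derivable_pt_lim_mult (fun s => f s - c) exp t l (exp t)).
  - replace l with (l - 0) by ring. apply (derivable_pt_lim_minus f (fct_cte c)); auto.
    apply derivable_pt_lim_const.
  - apply derivable_pt_lim_exp. Qed.

Lemma lsum_le : forall f g l, (forall e, In e l -> f e <= g e) -> lsum f l <= lsum g l.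
Proof. induction l; intros H; simpl; [lra|].
  assert (f a <= g a) by (apply H; simpl; auto).
  assert (lsum f l <= lsum g l) by (apply IHl; intros; apply H; simpl; auto). lra. Qed.

Lemma lsum_term_lb : forall f g l e, (forall x, In x l -> f x <= g x) -> In e l ->
  lsum f l - lsum g l + g e <= f e.
Proof. induction l; intros e H He; [destruct He|]. simpl in *.
  assert (lsum f l <= lsum g l) by (apply lsum_le; intros; apply H; auto).
  assert (f a <= g a) by (apply H; auto).
  destruct He as [<-|He]; [lra|].
  specialize (IHl e (fun x Hx => H x (or_intror Hx)) He). lra. Qed.

Lemma lsum_nonneg : forall f l, (forall e, In e l -> 0 <= f e) -> 0 <= lsum f l.
Proof. induction l; intros H; simpl; [lra|].
  assert (0 <= f a) by (apply H; simpl; auto).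
  assert (0 <= lsum f l) by (apply IHl; intros; apply H; simpl; auto). lra. Qed.

Lemma mono_inc : forall f f' a b, a <= b ->
  (forall c, a <= c <= b -> derivable_pt_lim f c (f' c)) ->
  (forall c, a <= c <= b -> 0 <= f' c) -> f a <= f b.
Proof. intros f f' a b Hab Hd Hn. destruct (Req_dec a b); [subst; lra|].
  destruct (MVT_cor2 f f' a b ltac:(lra) Hd) as [c [Hc Hc2]].
  specialize (Hn c ltac:(lra)). assert (0 <= f' c * (b - a)) by (apply Rmult_le_pos; lra). lra. Qed.

Theorem mainTheorem7
  (n m : nat) (ends : nat -> nat * nat) (s0 s1 : nat) (L : nat -> R)
  (D : nat -> R -> R) (p : R -> nat -> R)
  (Hsimple : simple_graph n m ends)
  (Hconn : connected n m ends)
  (Hs0 : (s0 < n)%nat) (Hs1 : (s1 < n)%nat) (Hs01 : s0 <> s1)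
  (HL : forall e, (e < m)%nat -> L e > 0)
  (HD0 : forall e, (e < m)%nat -> D e 0 > 0)
  (Hcont0 : forall e, (e < m)%nat -> forall eps, eps > 0 ->
     exists delta, delta > 0 /\
       forall t, 0 <= t < delta -> Rabs (D e t - D e 0) < eps)
  (Hpot : forall t, t >= 0 -> potentials n m ends L s0 s1 (fun e => D e t) (p t))
  (Hdyn : forall e, (e < m)%nat -> forall t, t > 0 ->
     derivable_pt_lim (D e) t
       (Rabs (current ends L (D e t) (p t) e) - D e t)) :
  forall e, (e < m)%nat -> ~ on_shortest_path m ends L s0 s1 e ->
    tends_to_0_at_infty (D e) /\
    tends_to_0_at_infty (fun t => current ends L (D e t) (p t) e).
Proof.
  intros e0 He0 Hno.
  set (Q := fun t e => current ends L (D e t) (p t) e).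
  assert (Dpos : forall e, (e < m)%nat -> forall t, t > 0 -> D e t > 0).
  { intros e He t Ht. specialize (HD0 e He).
    destruct (Hcont0 e He (D e 0 / 2) ltac:(lra)) as [dl [Hdl Hdl']].
    set (s := Rmin (dl / 2) (t / 2)).
    assert (Hs : 0 < s) by (unfold s; apply Rmin_pos; lra).
    assert (Hs2 : s <= dl / 2) by apply Rmin_l. assert (Hs3 : s <= t / 2) by apply Rmin_r.
    specialize (Hdl' s ltac:(lra)). apply Rlt_le, Rabs_le_between' in Hdl'.
    assert (Hm := mono_inc (fun x => (D e x - 0) * exp x)
                   (fun x => (Rabs (Q x e) - D e x) * exp x + (D e x - 0) * exp x) s t ltac:(lra)).
    simpl in Hm.
    assert ((D e s - 0) * exp s <= (D e t - 0) * exp t).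
    { apply Hm.
      - intros c Hc. apply deriv_mult_exp. apply Hdyn; auto; lra.
      - intros c Hc. pose proof (exp_pos c). pose proof (Rabs_pos (Q c e)). nra. }
    pose proof (exp_pos s). pose proof (exp_pos t).
    assert (0 < (D e s - 0) * exp s) by (apply Rmult_lt_0_compat; lra). nra. }
  assert (Dpos' : forall t, t > 0 -> forall e, (e < m)%nat -> (fun e => D e t) e > 0).
  { intros t Ht e He. apply Dpos; auto. }
  assert (Qb : forall e, (e < m)%nat -> forall t, t > 0 -> Rabs (Q t e) <= 1).
  { intros e He t Ht. unfold Q.
    apply (Q_le_1 n m ends L s0 s1 (fun e => D e t) (p t) Hsimple Hs0 Hs1 Hs01 HL (Dpos' t Ht)
             (Hpot t ltac:(lra)) e He). }
  set (M := fun e => Rmax (D e 1) 1).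
  assert (Dbd : forall e, (e < m)%nat -> forall t, t >= 1 -> D e t <= M e).
  { intros e He t Ht.
    assert (Hm := mono_dec (fun x => (D e x - 1) * exp x)
                   (fun x => (Rabs (Q x e) - D e x) * exp x + (D e x - 1) * exp x) 1 t ltac:(lra)).
    simpl in Hm.
    assert ((D e t - 1) * exp t <= (D e 1 - 1) * exp 1).
    { apply Hm.
      - intros c Hc. apply deriv_mult_exp. apply Hdyn; auto; lra.
      - intros c Hc. pose proof (exp_pos c). specialize (Qb e He c ltac:(lra)). nra. }
    pose proof (exp_pos 1). pose proof (exp_le' 1 t ltac:(lra)).
    assert (D e 1 <= M e) by apply Rmax_l. assert (1 <= M e) by apply Rmax_r.
    destruct (Rle_dec (D e t) 1); [lra|].
    assert ((D e t - 1) * exp 1 <= (D e t - 1) * exp t) by (apply Rmult_le_compat_l; lra).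
    nra. }
  destruct (distances n m ends L s0 s1 Hsimple Hconn HL Hs0 Hs1) as
    (d & d' & Ls & P & HP & HPl & Hd0 & Hd1 & Hd'1 & Hd'0 & Hlip & Hlip' & Hh & Hns).
  destruct (Hns e0 He0 Hno) as [Hn1 Hn2].
  destruct (cost_bound n m ends L s0 s1 d d' Ls e0 Hsimple Hs0 Hs1 Hs01 HL Hd0 Hd1 Hd'1 Hd'0
              Hlip Hlip' Hh He0 Hn1 Hn2) as [kappa [Hkappa Hcost]].
  assert (HPm : forall e, In e P -> (e < m)%nat).
  { destruct HP as [vs [W _]]. eapply walk_edges; eauto. }
  set (F := fun s => sumR m (fun e => L e * D e s) - lsum (fun e => L e * ln (D e s)) P).
  set (F' := fun t => sumR m (fun e => L e * (Rabs (Q t e) - D e t))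
                      - lsum (fun e => L e * ((Rabs (Q t e) - D e t) / D e t)) P).
  assert (FD : forall t, t > 0 -> derivable_pt_lim F t (F' t)).
  { intros t Ht. unfold F, F'.
    apply (derivable_pt_lim_minus (fun s => sumR m (fun e => L e * D e s))
                                  (fun s => lsum (fun e => L e * ln (D e s)) P)).
    - apply (deriv_sumR m (fun e s => L e * D e s) (fun e t => L e * (Rabs (Q t e) - D e t))).
      intros e He. apply deriv_scal. apply Hdyn; auto.
    - apply (deriv_lsum P (fun e s => L e * ln (D e s)) (fun e t => L e * ((Rabs (Q t e) - D e t) / D e t))).
      intros e He. apply deriv_scal. apply deriv_ln_comp; [apply Dpos; auto| apply Hdyn; auto]. }
  assert (FI : forall t, t > 0 -> F' t <= - kappa * Rabs (Q t e0)).
  { intros t Ht. unfold F', Q.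
    apply (static_ineq n m ends L s0 s1 P Ls kappa e0 (fun e => D e t) (p t) Hsimple Hs0 Hs1 Hs01 HL
             (Dpos' t Ht) (Hpot t ltac:(lra)) HP HPl).
    apply (Hcost (fun e => D e t) (p t) (Dpos' t Ht) (Hpot t ltac:(lra))). }
  set (CW := lsum (fun e => L e * ln (M e)) P).
  assert (Wbd : forall t, t >= 1 -> lsum (fun e => L e * ln (D e t)) P <= CW).
  { intros t Ht. apply lsum_le. intros e He. specialize (HPm e He).
    apply Rmult_le_compat_l; [left; apply HL; auto|]. apply ln_le'; [apply Dpos; auto; lra| apply Dbd; auto]. }
  assert (Vnn : forall t, t >= 1 -> 0 <= sumR m (fun e => L e * D e t)).
  { intros t Ht. apply sumR_nonneg. intros e He. specialize (HL e He). specialize (Dpos e He t ltac:(lra)). nra. }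
  assert (Flb : forall t, t >= 1 -> - CW <= F t).
  { intros t Ht. unfold F. specialize (Wbd t Ht). specialize (Vnn t Ht). lra. }
  assert (Dto0 : forall eps, eps > 0 -> exists T, forall t, t >= T -> D e0 t < eps).
  { apply (decay (fun s => F s + kappa * D e0 s)
                 (fun t => F' t + kappa * (Rabs (Q t e0) - D e0 t)) (D e0) 1 kappa (- CW) (1 + M e0)); auto.
    - assert (1 <= M e0) by apply Rmax_r. lra.
    - intros t Ht. apply (derivable_pt_lim_plus F (fun s => kappa * D e0 s)).
      + apply FD; lra.
      + apply deriv_scal. apply Hdyn; auto; lra.
    - intros t Ht. specialize (FI t ltac:(lra)). lra.
    - intros t Ht. specialize (Dpos e0 He0 t ltac:(lra)). lra.
    - intros t Ht. specialize (Flb t ltac:(lra)). specialize (Dpos e0 He0 t ltac:(lra)). nra.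
    - apply (lipschitz_of_deriv (D e0) (fun c => Rabs (Q c e0) - D e0 c) 1).
      + intros c Hc. apply Hdyn; auto; lra.
      + intros c Hc. specialize (Dpos e0 He0 c ltac:(lra)). specialize (Dbd e0 He0 c ltac:(lra)).
        specialize (Qb e0 He0 c ltac:(lra)). pose proof (Rabs_pos (Q c e0)).
        apply Rabs_le. lra. }
  split.
  { intros eps Heps. destruct (Dto0 eps Heps) as [T HT]. exists (Rmax T 1). intros t Ht.
    assert (t >= T) by (pose proof (Rmax_l T 1); lra). assert (t >= 1) by (pose proof (Rmax_r T 1); lra).
    rewrite Rabs_right by (left; apply Dpos; auto; lra). apply HT; auto. }
  assert (Fdec : forall t, t >= 1 -> F t <= F 1).
  { intros t Ht. apply (mono_dec F F' 1 t); [lra| intros; apply FD; lra|].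
    intros c Hc. specialize (FI c ltac:(lra)). pose proof (Rabs_pos (Q c e0)). nra. }
  set (c := fun e => (- F 1 - CW + L e * ln (M e)) / L e).
  assert (Dlb : forall e, In e P -> forall t, t >= 1 -> exp (c e) <= D e t).
  { intros e He t Ht. pose proof (HPm e He) as Hem. pose proof (HL e Hem) as HLe.
    assert (Hdp : D e t > 0) by (apply Dpos; auto; lra).
    pose proof (lsum_term_lb (fun e => L e * ln (D e t)) (fun e => L e * ln (M e)) P e) as T.
    simpl in T. specialize (T ltac:(intros x Hx; specialize (HPm x Hx);
       apply Rmult_le_compat_l; [left; apply HL; auto|]; apply ln_le'; [apply Dpos; auto; lra| apply Dbd; auto]) He).
    fold CW in T. specialize (Fdec t Ht). specialize (Vnn t Ht).
    assert (EF : F t = sumR m (fun e => L e * D e t) - lsum (fun e => L e * ln (D e t)) P) by reflexivity.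
    assert (c e <= ln (D e t)).
    { unfold c. apply (Rmult_le_reg_l (L e)); [lra|]. unfold Rdiv.
      replace (L e * ((- F 1 - CW + L e * ln (M e)) * / L e)) with (- F 1 - CW + L e * ln (M e)) by (field; lra).
      lra. }
    rewrite <- (exp_ln (D e t)) by lra. apply exp_le'. auto. }
  set (CE := lsum (fun e => L e / exp (c e)) P).
  assert (Qsq : forall t, t >= 1 -> Q t e0 * Q t e0 <= D e0 t * CE / L e0).
  { intros t Ht.
    set (dp := fun e => p t (fst (ends e)) - p t (snd (ends e))).
    assert (HQd : forall e, Q t e = D e t * dp e / L e) by reflexivity.
    destruct (Hpot t ltac:(lra)) as [Hp1 Hk1].
    pose proof (flow_identity n m ends L s0 s1 (fun e => D e t) (p t) (p t) Hsimple Hs0 Hs1 Hs01 (conj Hp1 Hk1)) as FE.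
    rewrite Hp1 in FE. cbv beta in FE.
    assert (Tnn : forall e, (e < m)%nat -> 0 <= current ends L (D e t) (p t) e * (p t (fst (ends e)) - p t (snd (ends e)))).
    { intros e He. fold (Q t e). fold (dp e). rewrite HQd. specialize (HL e He).
      specialize (Dpos e He t ltac:(lra)).
      replace (D e t * dp e / L e * dp e) with ((D e t / L e) * (dp e * dp e)) by (field; lra).
      apply Rmult_le_pos; [apply Rlt_le, Rdiv_lt_0_compat; lra| nra]. }
    pose proof (sumR_ge_term m _ e0 Tnn He0) as T0. rewrite FE in T0.
    destruct HP as [vs [W _]].
    pose proof (walk_tele m ends (p t) s0 s1 vs P W) as Tel. rewrite Hp1 in Tel.
    assert (lsum (fun e => Rabs (p t (fst (ends e)) - p t (snd (ends e)))) P <= CE).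
    { apply lsum_le. intros e He. specialize (HPm e He).
      specialize (Qb e HPm t ltac:(lra)). specialize (Dlb e He t Ht). specialize (HL e HPm).
      specialize (Dpos e HPm t ltac:(lra)). pose proof (exp_pos (c e)).
      fold (dp e). fold (Q t e) in Qb. rewrite HQd in Qb.
      unfold Rdiv in Qb. rewrite !Rabs_mult, Rabs_right with (r := D e t), Rabs_right with (r := / L e) in Qb
        by (try apply Rle_ge, Rlt_le, Rinv_0_lt_compat; lra).
      assert (Rabs (dp e) <= L e / D e t).
      { apply (Rmult_le_reg_l (D e t / L e)); [apply Rdiv_lt_0_compat; lra|].
        replace (D e t / L e * (L e / D e t)) with 1 by (field; lra).
        unfold Rdiv. lra. }
      assert (L e / D e t <= L e / exp (c e)).
      { unfold Rdiv. apply Rmult_le_compat_l; [lra|]. apply Rinv_le_contravar; lra. }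
      lra. }
    fold (Q t e0) (dp e0) in T0. rewrite HQd in T0 |- *.
    specialize (HL e0 He0). specialize (Dpos e0 He0 t ltac:(lra)).
    replace (D e0 t * dp e0 / L e0 * (D e0 t * dp e0 / L e0)) with ((D e0 t / L e0) * (D e0 t * dp e0 / L e0 * dp e0))
      by (field; lra).
    replace (D e0 t * CE / L e0) with ((D e0 t / L e0) * CE) by (field; lra).
    apply Rmult_le_compat_l; [apply Rlt_le, Rdiv_lt_0_compat; lra|]. lra. }
  assert (CEnn : 0 <= CE).
  { unfold CE. apply lsum_nonneg. intros e He. left.
    apply Rdiv_lt_0_compat; [apply HL, HPm; auto| apply exp_pos]. }
  intros eps Heps. specialize (HL e0 He0).
  destruct (Dto0 (eps * eps * L e0 / (CE + 1))) as [T HT].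
  { apply Rdiv_lt_0_compat; [|lra]. apply Rmult_lt_0_compat; [nra|lra]. }
  exists (Rmax T 1). intros t Ht.
  assert (t >= T) by (pose proof (Rmax_l T 1); lra). assert (Ht1 : t >= 1) by (pose proof (Rmax_r T 1); lra).
  specialize (HT t H). specialize (Qsq t Ht1). specialize (Dpos e0 He0 t ltac:(lra)).
  fold (Q t e0).
  assert (D e0 t * CE / L e0 <= eps * eps * CE / (CE + 1)).
  { unfold Rdiv. rewrite Rmult_assoc, Rmult_comm with (r1 := CE).
    apply (Rmult_le_reg_r (L e0)); [lra|].
    replace (D e0 t * (/ L e0 * CE) * L e0) with (D e0 t * CE) by (field; lra).
    unfold Rdiv in HT.
    assert (D e0 t * CE <= eps * eps * L e0 * / (CE + 1) * CE) by (apply Rmult_le_compat_r; lra).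
    replace (eps * eps * (/ (CE + 1) * CE) * L e0) with (eps * eps * L e0 * / (CE + 1) * CE) by ring. lra. }
  assert (eps * eps * CE / (CE + 1) < eps * eps).
  { apply (Rmult_lt_reg_r (CE + 1)); [lra|]. replace (eps * eps * CE / (CE + 1) * (CE + 1)) with (eps * eps * CE) by (field; lra).
    nra. }
  destruct (Rle_dec 0 (Q t e0)); [rewrite Rabs_right by lra | rewrite Rabs_left by lra]; nra.
Qed.
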